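(* Let $S$ be a solid and let $x,y,z\in S$. Then $$xy+xz=x(y+z)\iff \Big(e(x)(y+z)=e(x)y+e(x)z\ \ \text{or}\ \ R(x)\le R(y)+R(z)\Big).$$
   Context: A solid is a set $S$ with two binary operations $+$ and $\cdot$ (written $xy$) and a binary relation $\le$ satisfying the following axioms (all variables range over $S$). (A1) $+$ is associative and commutative. (A2) For each $x$ there is $e$ with $x+e=x$ such that $e+f=e$ for every $f$ with $x+f=x$; this $e$ is unique and is denoted $e(x)$ (the magnitude of $x$). An element $x$ with $x=e(x)$ is called a magnitude. (A3) For each $x$ there is $s$ with $x+s=e(x)$ and $e(s)=e(x)$; it is unique and denoted $-x$; write $x-y$ for $x+(-y)$. (A4) $e(x+y)=e(x)$ or $e(x+y)=e(y)$. (M1) $\cdot$ is associative and commutative. (M2) For each $x\neq e(x)$ there is $u$ with $xu=x$ such that $uv=u$ for every $v$ with $xv=x$; it is unique and denoted $u(x)$. (M3) For each $x\ne e(x)$ there is $d$ with $xd=u(x)$ and $u(d)=u(x)$; it is unique and denoted $x^{-1}$; write $y/x$ for $yx^{-1}$. (M4) If $x\neq e(x)$ and $y\ne e(y)$ then $u(xy)=u(x)$ or $u(xy)=u(y)$. (O1) $\le$ is a total order (reflexive, antisymmetric, transitive, total); $x<y$ means $x\le y$ and $x\ne y$. (O2) $x\le y\Rightarrow x+z\le y+z$. (O3) $y+e(x)=e(x)\Rightarrow (y\le e(x)$ and $-y\le e(x))$. (O4) $(e(x)<x$ and $y\le z)\Rightarrow xy\le xz$. (O5) $e(y)\le y\le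 z\Rightarrow e(x)y\le e(x)z$. (AM1) For all $x,y$ there is $z$ with $e(x)y=e(z)$. (AM2) $e(xy)=e(x)y+e(y)x$. (AM3) If $x\ne e(x)$ then $e(u(x))=e(x)/x$. (AM4) (distributivity axiom) $xy+xz=x(y+z)+e(x)y+e(x)z$. (AM5) $-(xy)=(-x)y$. (E1) There is $m$ with $m+x=x$ for all $x$; it is unique, called zero and denoted $0$. (E2) There is $u$ with $ux=x$ for all $x$; it is unique, called one and denoted $1$. (E3) There is $M$ with $e(x)+M=M$ for all $x$. (E4) There is $x$ with $e(x)\ne 0$ and $e(x)\ne M$. (E5) For every $x$ there is $a$ with $x=a+e(x)$ and $e(a)=0$. (E6) If $x,y$ are magnitudes with $x<y$, there is $z$ with $z\ne e(z)$ and $x<z<y$. Further notation: $S^*=\{x\in S: x\ne e(x)\}$ (zeroless elements). $x$ is positive if $e(x)\le x$ and negative if $x<e(x)$; $|x|=x$ if $x$ is positive and $|x|=-x$ if $x$ is negative. $x$ is precise if $e(x)=0$. The relative uncertainty $R(x)$ is $e(u(x))$ if $x\ne e(x)$, and $M$ (from (E3)) if $x=e(x)$. *)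

(* Defs.v *)
From Stdlib Require Import Classical ClassicalEpsilon.

Set Implicit Arguments.

Record solid := Solid {
  car :> Type;
  add : car -> car -> car;
  mul : car -> car -> car;
  le  : car -> car -> Prop;
  (* the operations whose existence (and uniqueness) the axioms assert *)
  mag : car -> car;        (* e(x) *)
  opp : car -> car;
  unt : car -> car;        (* u(x), meaningful for x <> e(x) *)
  inv : car -> car;        (* x^-1, meaningful for x <> e(x) *)
  zero : car;
  one : car;
  top : car;               (* M from (E3) *)
  addA : forall x y z, add x (add y z) = add (add x y) z;
  addC : forall x y, add x y = add y x;
  mag_spec : forall x, add x (mag x) = x /\
      (forall f, add x f = x -> add (mag x) f = mag x);
  mag_uniq : forall x e, add x e = x ->
      (forall f, add x f = x -> add e f = e) -> e = mag x;
  opp_spec : forall x, add x (opp x) = mag x /\ mag (opp x) = mag x;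
  opp_uniq : forall x s, add x s = mag x -> mag s = mag x -> s = opp x;
  A4 : forall x y, mag (add x y) = mag x \/ mag (add x y) = mag y;
  mulA : forall x y z, mul x (mul y z) = mul (mul x y) z;
  mulC : forall x y, mul x y = mul y x;
  unt_spec : forall x, x <> mag x -> mul x (unt x) = x /\
      (forall v, mul x v = x -> mul (unt x) v = unt x);
  unt_uniq : forall x u, x <> mag x -> mul x u = x ->
      (forall v, mul x v = x -> mul u v = u) -> u = unt x;
  inv_spec : forall x, x <> mag x ->
      inv x <> mag (inv x) /\ mul x (inv x) = unt x /\ unt (inv x) = unt x;
  inv_uniq : forall x d, x <> mag x -> d <> mag d ->
      mul x d = unt x -> unt d = unt x -> d = inv x;
  M4 : forall x y, x <> mag x -> y <> mag y -> mul x y <> mag (mul x y) ->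
      unt (mul x y) = unt x \/ unt (mul x y) = unt y;
  le_refl : forall x, le x x;
  le_anti : forall x y, le x y -> le y x -> x = y;
  le_trans : forall x y z, le x y -> le y z -> le x z;
  le_total : forall x y, le x y \/ le y x;
  O2 : forall x y z, le x y -> le (add x z) (add y z);
  O3 : forall x y, add y (mag x) = mag x ->
      le y (mag x) /\ le (opp y) (mag x);
  O4 : forall x y z, (le (mag x) x /\ mag x <> x) -> le y z -> le (mul x y) (mul x z);
  O5 : forall x y z, le (mag y) y -> le y z -> le (mul (mag x) y) (mul (mag x) z);
  AM1 : forall x y, exists z, mul (mag x) y = mag z;
  AM2 : forall x y, mag (mul x y) = add (mul (mag x) y) (mul (mag y) x);
  AM3 : forall x, x <> mag x -> mag (unt x) = mul (mag x) (inv x);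
  AM4 : forall x y z, add (mul x y) (mul x z) =
      add (add (mul x (add y z)) (mul (mag x) y)) (mul (mag x) z);
  AM5 : forall x y, opp (mul x y) = mul (opp x) y;
  E1 : forall x, add zero x = x;
  E2 : forall x, mul one x = x;
  E3 : forall x, add (mag x) top = top;
  E4 : exists x, mag x <> zero /\ mag x <> top;
  E5 : forall x, exists a, x = add a (mag x) /\ mag a = zero;
  E6 : forall x y, x = mag x -> y = mag y -> (le x y /\ x <> y) ->
      exists z, z <> mag z /\ (le x z /\ x <> z) /\ (le z y /\ z <> y)
}.

Definition relunc (S : solid) (x : S) : S :=
  match excluded_middle_informative (x = mag S x) with
  | left _ => top S
  | right _ => mag S (unt S x)
  end.

(* Main.v *)
Require Import Defs.
From Stdlib Require Import Classical ClassicalEpsilon.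

Declare Scope sol_scope.
Delimit Scope sol_scope with sol.
Notation "x + y" := (add _ x y) : sol_scope.
Notation "x * y" := (mul _ x y) : sol_scope.
Notation "x <= y" := (le _ x y) : sol_scope.
Notation "- x" := (opp _ x) : sol_scope.
Notation "'ε' x" := (mag _ x) (at level 1) : sol_scope.
Open Scope sol_scope.

Definition ismag {S : solid} (m : S) := mag S m = m.


Lemma mm_idem {S : solid} (x : S) : ε x + ε x = ε x.
Proof. destruct (mag_spec S x) as [_ H]. apply H. apply (proj1 (mag_spec S x)). Qed.

Lemma idem_mag {S : solid} (u : S) : u + u = u -> ε u = u.
Proof. intro H. symmetry. apply mag_uniq; auto. Qed.

Lemma magmag {S : solid} (x : S) : ε (ε x) = ε x.
Proof. apply idem_mag, mm_idem. Qed.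

Lemma ismag_mag {S : solid} (x : S) : ismag (ε x).
Proof. apply magmag. Qed.

Lemma add_mag {S : solid} (x : S) : x + ε x = x.
Proof. apply (proj1 (mag_spec S x)). Qed.

Lemma mag_absorb {S : solid} (x f : S) : x + f = x -> ε x + f = ε x.
Proof. apply (proj2 (mag_spec S x)). Qed.

Lemma mag_add {S : solid} (x y : S) : ε (x + y) = ε x + ε y.
Proof.
  assert (H1 : ε (x + y) + ε x = ε (x + y)).
  { apply mag_absorb. rewrite (addC S x y), <- addA, add_mag; auto. }
  assert (H2 : ε (x + y) + ε y = ε (x + y)).
  { apply mag_absorb. rewrite <- addA, add_mag; auto. }
  destruct (A4 S x y) as [H|H]; rewrite H in *.
  - rewrite H2; auto.
  - rewrite addC, H1; auto.
Qed.

Lemma absorb_iff {S : solid} (x m : S) : ismag m -> (x + m = x <-> m + ε x = ε x).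
Proof.
  intro Hm; split; intro H.
  - rewrite addC. apply mag_absorb; auto.
  - rewrite <- (add_mag x) at 1. rewrite <- addA, (addC S (ε x) m), H, add_mag; auto.
Qed.

Lemma le_of_absorb {S : solid} (m n : S) : ismag n -> m + n = n -> m <= n.
Proof. intros Hn H. unfold ismag in Hn. rewrite <- Hn in *. apply (O3 S n m H). Qed.

Lemma ismag_add {S : solid} (m n : S) : ismag m -> ismag n -> ismag (m + n).
Proof. unfold ismag; intros Hm Hn. rewrite mag_add, Hm, Hn; auto. Qed.

Lemma mag_max {S : solid} (m n : S) : ismag m -> ismag n -> m + n = m \/ m + n = n.
Proof. unfold ismag; intros Hm Hn. destruct (A4 S m n) as [H|H]; rewrite mag_add, Hm, Hn in H; auto. Qed.

Lemma absorb_of_le {S : solid} (m n : S) : ismag m -> ismag n -> m <= n -> m + n = n.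
Proof.
  intros Hm Hn H. destruct (mag_max m n Hm Hn) as [H1|H1]; auto.
  assert (n <= m) by (apply le_of_absorb; auto; rewrite addC; auto).
  assert (m = n) by (apply le_anti; auto). subst. auto.
Qed.

Lemma mag0 {S : solid} : ε (zero S) = zero S.
Proof. apply idem_mag, E1. Qed.

Lemma zero_le_mag {S : solid} (m : S) : ismag m -> zero S <= m.
Proof. intro Hm. apply le_of_absorb; auto. apply E1. Qed.

Lemma opp_opp {S : solid} (x : S) : - - x = x.
Proof.
  symmetry. apply opp_uniq.
  - rewrite addC, (proj1 (opp_spec S x)), (proj2 (opp_spec S x)); auto.
  - rewrite (proj2 (opp_spec S x)); auto.
Qed.

Lemma mag_opp {S : solid} (x : S) : ε (- x) = ε x.
Proof. apply (proj2 (opp_spec S x)). Qed.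

Lemma add_opp {S : solid} (x : S) : x + - x = ε x.
Proof. apply (proj1 (opp_spec S x)). Qed.

Lemma mag_idem {S : solid} (m : S) : ismag m -> m + m = m.
Proof. unfold ismag; intro Hm. pose proof (mm_idem m) as H. rewrite Hm in H. auto. Qed.

Lemma opp_mag {S : solid} (m : S) : ismag m -> - m = m.
Proof. intro Hm. symmetry. apply opp_uniq. rewrite mag_idem; auto. reflexivity. Qed.

Lemma opp_add {S : solid} (x y : S) : - (x + y) = - x + - y.
Proof.
  symmetry. apply opp_uniq.
  - rewrite mag_add. rewrite (addA S (x + y)), <- (addA S x y), (addC S y (- x)), addA, add_opp, <- addA, add_opp. auto.
  - rewrite !mag_add, !mag_opp. auto.
Qed.

Lemma addCA {S : solid} (x y z : S) : x + (y + z) = y + (x + z).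
Proof. rewrite !addA, (addC S x y). auto. Qed.

Lemma O2l {S : solid} (x y z : S) : x <= y -> z + x <= z + y.
Proof. intro H. rewrite !(addC S z). apply O2; auto. Qed.

Lemma le_add_mag {S : solid} (x m : S) : ismag m -> x <= x + m.
Proof. intro Hm. pose proof (O2 S _ _ x (zero_le_mag m Hm)) as H. rewrite E1, addC in H. auto. Qed.

Lemma neg_opp {S : solid} (x : S) : x <= ε x -> ε x <= - x.
Proof.
  intro H. pose proof (O2 S _ _ (- x) H) as H1. rewrite add_opp in H1.
  assert (E : ε x + - x = - x) by (rewrite addC, <- (mag_opp x), add_mag; auto).
  rewrite E in H1. auto.
Qed.

Lemma both_le {S : solid} (x : S) : x <= ε x -> - x <= ε x -> x = ε x.
Proof.
  intros H1 H2. pose proof (neg_opp x H1).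
  assert (- x = ε x) by (apply le_anti; auto).
  rewrite <- (opp_opp x), H0, opp_mag; [rewrite magmag; auto | apply magmag].
Qed.

Lemma pos_or_mag {S : solid} (x : S) : - x <= ε x -> ε x <= x.
Proof.
  intro H. destruct (le_total S (ε x) x) as [H1|H1]; auto.
  pose proof (both_le x H1 H) as E. rewrite <- E. apply le_refl.
Qed.

Lemma opp_pos {S : solid} (x : S) : x <= ε x -> ε (- x) <= - x.
Proof. intro H. rewrite mag_opp. apply neg_opp; auto. Qed.

Lemma zl_opp {S : solid} (x : S) : x <> ε x -> - x <> ε (- x).
Proof. intros H H1. apply H. rewrite mag_opp in H1. rewrite <- (opp_opp x), H1, opp_mag; [rewrite magmag; auto | apply magmag]. Qed.

Lemma mem_le {S : solid} (y m : S) : ismag m -> y + m = m -> y <= m /\ - y <= m.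
Proof. intros Hm H. unfold ismag in Hm. rewrite <- Hm in *. apply O3; auto. Qed.

Lemma conv {S : solid} (y m : S) : ismag m -> y <= m -> - y <= m -> y + m = m.
Proof.
  intros Hm H1 H2.
  assert (He : ε y <= m).
  { pose proof (O2 S _ _ (- y) H1) as H3. rewrite add_opp in H3.
    pose proof (O2l _ _ m H2) as H4. rewrite mag_idem in H4; auto.
    eapply le_trans; [exact H3 | exact H4]. }
  assert (Hs : ε (y + m) = m).
  { rewrite mag_add, Hm. apply absorb_of_le; auto. apply magmag. }
  assert (A1 : y + m <= m).
  { pose proof (O2 S _ _ m H1) as H3. rewrite (mag_idem m Hm) in H3. exact H3. }
  assert (A2 : - (y + m) <= m).
  { rewrite opp_add, (opp_mag m Hm). pose proof (O2 S _ _ m H2) as H3. rewrite (mag_idem m Hm) in H3. exact H3. }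
  assert (B1 : y + m <= ε (y + m)) by (rewrite Hs; exact A1).
  assert (B2 : - (y + m) <= ε (y + m)) by (rewrite Hs; exact A2).
  pose proof (both_le _ B1 B2) as H. rewrite H, Hs. reflexivity.
Qed.

Lemma pos_neg {S : solid} (x : S) : ε x <= x -> - x <= ε x.
Proof.
  intro H. pose proof (O2 S _ _ (- x) H) as H1. rewrite add_opp in H1.
  assert (E : ε x + - x = - x) by (rewrite addC, <- (mag_opp x), add_mag; auto).
  rewrite E in H1. auto.
Qed.

Lemma mul_ismag {S : solid} (m w : S) : ismag m -> ismag (m * w).
Proof.
  unfold ismag; intro Hm. destruct (AM1 S m w) as [z Hz]. rewrite Hm in Hz. rewrite Hz. apply magmag.
Qed.

Lemma mul_ismag_r {S : solid} (m w : S) : ismag m -> ismag (w * m).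
Proof. intro. rewrite mulC. apply mul_ismag; auto. Qed.

Lemma mul1l {S : solid} (x : S) : one S * x = x.
Proof. apply E2. Qed.
Lemma mul1r {S : solid} (x : S) : x * one S = x.
Proof. rewrite mulC; apply E2. Qed.

Lemma mul_oppl {S : solid} (x y : S) : (- x) * y = - (x * y).
Proof. symmetry; apply AM5. Qed.
Lemma mul_oppr {S : solid} (x y : S) : x * (- y) = - (x * y).
Proof. rewrite mulC, mul_oppl, mulC; auto. Qed.

Lemma mul_opp_m {S : solid} (m w : S) : ismag m -> m * (- w) = m * w.
Proof. intro Hm. rewrite mul_oppr. apply opp_mag, mul_ismag; auto. Qed.

Lemma subdist {S : solid} (m y z : S) : ismag m -> m * (y + z) <= m * y + m * z.
Proof.
  intro Hm. pose proof (AM4 S m y z) as H. unfold ismag in Hm. rewrite Hm in H.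
  rewrite <- addA in H. apply le_of_absorb.
  - apply ismag_add; apply mul_ismag; auto.
  - symmetry; auto.
Qed.

Lemma magw_le {S : solid} (m w : S) : ismag m -> ε w * m <= m * w.
Proof.
  intro Hm. pose proof (AM2 S m w) as H. pose proof (mul_ismag m w Hm) as H1.
  unfold ismag in *. rewrite H1, Hm in H. apply le_of_absorb; auto.
  rewrite addC; symmetry; auto.
Qed.

Lemma O5' {S : solid} (m y z : S) : ismag m -> ε y <= y -> y <= z -> m * y <= m * z.
Proof. intros Hm H1 H2. pose proof (O5 S m y z H1 H2) as H. unfold ismag in Hm. rewrite Hm in H. auto. Qed.

Lemma mon {S : solid} (w m n : S) : ismag m -> ismag n -> m <= n -> w * m <= w * n.
Proof.
  intros Hm Hn H. destruct (classic (w = ε w)) as [Hw|Hw].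
  - rewrite Hw. apply O5'; auto. apply ismag_mag. unfold ismag in Hm; rewrite Hm; apply le_refl.
  - destruct (le_total S (ε w) w) as [Hp|Hp].
    + apply (O4 S m n (conj Hp (fun e => Hw (eq_sym e))) H).
    + pose proof (O4 S m n (conj (opp_pos w Hp) (fun e => zl_opp w Hw (eq_sym e))) H) as H1.
      rewrite !mul_oppl in H1. rewrite !opp_mag in H1; auto; apply mul_ismag_r; auto.
Qed.

Lemma dist_mag {S : solid} (w m n : S) : ismag m -> ismag n -> w * (m + n) = w * m + w * n.
Proof.
  intros Hm Hn. destruct (le_total S m n) as [H|H].
  - rewrite (absorb_of_le m n Hm Hn H). symmetry. apply absorb_of_le; try apply mul_ismag_r; auto. apply mon; auto.
  - rewrite (addC S m n), (absorb_of_le n m Hn Hm H). rewrite (addC S (w * m)). symmetry. apply absorb_of_le; try apply mul_ismag_r; auto. apply mon; auto.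
Qed.

Lemma mem_scale {S : solid} (w y m : S) : ismag m -> y + m = m -> w * y + w * m = w * m.
Proof.
  intros Hm H. pose proof (AM4 S w y m) as H1. rewrite H in H1. rewrite H1.
  rewrite <- addA. apply absorb_iff. apply ismag_add; apply mul_ismag; apply ismag_mag.
  rewrite (mul_ismag_r m w Hm). apply absorb_of_le.
  - apply ismag_add; apply mul_ismag; apply ismag_mag.
  - apply mul_ismag_r; auto.
  - destruct (mem_le y m Hm H) as [Hy1 Hy2].
    assert (Hb : ε w * y <= ε w * m).
    { destruct (le_total S (ε y) y) as [Hp|Hp].
      - apply O5; auto.
      - rewrite <- (mul_opp_m (ε w) y); [|apply ismag_mag]. apply O5; auto. apply opp_pos; auto. }
    assert (Hc : ε w * m <= w * m) by (rewrite (mulC S w); apply magw_le; auto).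
    rewrite (absorb_of_le (ε w * y) (ε w * m)); try apply mul_ismag; try apply ismag_mag; auto.
Qed.

Lemma Ey_le {S : solid} (y : S) : ε (one S) * y <= ε y.
Proof.
  pose proof (AM4 S (one S) y (- y)) as H.
  rewrite !mul1l, add_opp, mul_opp_m in H; [|apply ismag_mag].
  rewrite <- addA, (mag_idem (ε (one S) * y)) in H; [|apply mul_ismag, ismag_mag].
  apply le_of_absorb. apply ismag_mag. rewrite addC. symmetry. auto.
Qed.

Lemma idem_K {S : solid} (p : S) : p * p = p -> ε p * p = ε p.
Proof.
  intro H. pose proof (AM2 S p p) as H1. rewrite H in H1.
  rewrite mag_idem in H1; [auto | apply mul_ismag, ismag_mag].
Qed.

Lemma idem_pos {S : solid} (p : S) : p <> ε p -> p * p = p -> ε p <= p.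
Proof.
  intros Hz H. pose proof (idem_K p H) as HK.
  destruct (le_total S (ε p) p) as [Hp|Hp]; auto.
  pose proof (O4 S p (ε p) (conj (opp_pos p Hp) (fun e => zl_opp p Hz (eq_sym e))) Hp) as H1.
  rewrite mul_oppl, H, mul_oppl, (mulC S p), HK, (opp_mag (ε p) (ismag_mag p)) in H1.
  exfalso. apply Hz. apply both_le; auto.
Qed.

Lemma one_zl {S : solid} (w : S) : w <> ε w -> one S <> ε (one S).
Proof.
  intros Hw H. apply Hw. rewrite <- (mul1l w), H. symmetry. apply mul_ismag, ismag_mag.
Qed.

Lemma one_pos {S : solid} (w : S) : w <> ε w -> ε (one S) <= one S.
Proof. intro Hw. apply idem_pos. apply (one_zl w Hw). apply mul1l. Qed.


Lemma u_w {S : solid} (w : S) (Hw : w <> ε w) : w * unt S w = w.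
Proof. apply (proj1 (unt_spec S Hw)). Qed.

Lemma u_u {S : solid} (w : S) (Hw : w <> ε w) : unt S w * unt S w = unt S w.
Proof. apply (proj2 (unt_spec S Hw)). apply u_w; auto. Qed.

Lemma u_zl {S : solid} (w : S) (Hw : w <> ε w) : unt S w <> ε (unt S w).
Proof.
  intro H. apply Hw. rewrite <- (u_w w Hw), mulC, H. symmetry. apply mul_ismag, ismag_mag.
Qed.

Lemma u_pos {S : solid} (w : S) (Hw : w <> ε w) : ε (unt S w) <= unt S w.
Proof. apply idem_pos. apply u_zl; auto. apply u_u; auto. Qed.

Lemma Ru {S : solid} (w : S) (Hw : w <> ε w) : ε (unt S w) * unt S w = ε (unt S w).
Proof. apply idem_K, u_u; auto. Qed.

Lemma one_le_uu {S : solid} (w : S) (Hw : w <> ε w) : one S <= unt S w + unt S w.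
Proof.
  set (u := unt S w). set (t := one S + - u).
  assert (Hu : u <> ε u) by apply (u_zl w Hw).
  assert (Hup : ε u <= u) by apply (u_pos w Hw).
  assert (HR : ε u * u = ε u) by apply (Ru w Hw).
  assert (Huu : u * u = u) by apply (u_u w Hw).
  assert (Hut : u * t + ε u = ε u).
  { pose proof (AM4 S u (one S) (- u)) as H. fold t in H.
    rewrite mul1r, mul_oppr, Huu, add_opp, mul1r, mul_opp_m, HR in H; [|apply ismag_mag].
    rewrite <- addA, mag_idem in H; [|apply ismag_mag]. auto. }
  assert (Hsum : u + t = one S + ε u) by (unfold t; rewrite addCA, add_opp; auto).
  assert (H1 : one S <= u + t) by (rewrite Hsum; apply le_add_mag, ismag_mag).
  destruct (le_total S t u) as [H|H].
  - eapply le_trans; [exact H1|]. apply O2l; auto.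
  - exfalso.
    assert (H2 : one S <= t + t) by (eapply le_trans; [exact H1| apply O2; auto]).
    pose proof (O4 S (one S) (t + t) (conj Hup (fun e => Hu (eq_sym e))) H2) as H3.
    rewrite mul1r in H3.
    assert (HRt : ε u * t + ε u = ε u).
    { apply absorb_of_le; try apply mul_ismag; try apply ismag_mag.
      unfold t. eapply le_trans; [apply subdist, ismag_mag|].
      rewrite mul1r, mul_opp_m, HR, mag_idem; try apply ismag_mag. apply le_refl. }
    assert (HX : u * (t + t) + ε u = ε u).
    { pose proof (AM4 S u t t) as H4.
      assert (H5 : u * t + u * t + ε u = ε u) by (rewrite <- addA, !Hut; auto).
      rewrite H4 in H5. rewrite <- H5 at 2.
      rewrite <- !addA. f_equal. f_equal. rewrite HRt, HRt. auto. }
    destruct (mem_le _ _ (ismag_mag u) HX) as [H6 _].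
    apply Hu. apply le_anti; auto. eapply le_trans; eauto.
Qed.

Lemma MU_lower {S : solid} (w m : S) (Hw : w <> ε w) : ismag m -> m <= m * unt S w.
Proof.
  intro Hm. pose proof (O5' m _ _ Hm (one_pos w Hw) (one_le_uu w Hw)) as H.
  rewrite mul1r in H. eapply le_trans; [exact H|].
  eapply le_trans; [apply subdist; auto|]. rewrite mag_idem; [apply le_refl| apply mul_ismag; auto].
Qed.

Lemma E_le_R {S : solid} (w : S) (Hw : w <> ε w) : ε (one S) <= ε (unt S w).
Proof.
  eapply le_trans; [apply (MU_lower w); auto; apply ismag_mag|]. apply Ey_le.
Qed.

Lemma neg_one_le {S : solid} (w : S) (Hw : w <> ε w) : - one S <= ε (one S).
Proof. apply pos_neg, (one_pos w Hw). Qed.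

Lemma MU_upper {S : solid} (w m : S) (Hw : w <> ε w) : ismag m -> m * unt S w <= m.
Proof.
  intro Hm. set (u := unt S w).
  assert (Hu : u <> ε u) by apply (u_zl w Hw).
  assert (Hup : ε u <= u) by apply (u_pos w Hw).
  assert (HR : ε u * u = ε u) by apply (Ru w Hw).
  assert (Huu : u * u = u) by apply (u_u w Hw).
  assert (HE : ε (one S) <= ε u) by apply (E_le_R w Hw).
  assert (HE' : ε (one S) + ε u = ε u) by (apply absorb_of_le; auto; apply ismag_mag).
  destruct (le_total S u (one S)) as [H|H].
  - pose proof (O5' m _ _ Hm Hup H) as H1. rewrite mul1r in H1. auto.
  - set (s := u + - one S).
    assert (Hus : u * s + ε u = ε u).
    { pose proof (AM4 S u u (- one S)) as H1. fold s in H1.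
      rewrite Huu, mul_oppr, mul1r, add_opp, HR, mul_opp_m, mul1r in H1; [|apply ismag_mag].
      rewrite <- addA, mag_idem in H1; [|apply ismag_mag]. auto. }
    assert (HEs : ε (one S) <= s).
    { pose proof (O2 S _ _ (- one S) H) as H1. rewrite add_opp in H1. auto. }
    assert (Hms : ε s = ε u).
    { unfold s. rewrite mag_add, mag_opp, addC. auto. }
    assert (Hns : - s <= ε s).
    { pose proof (O2 S _ _ (- s) HEs) as H1. rewrite add_opp in H1.
      assert (E : ε (one S) + - s = - s).
      { rewrite addC. apply absorb_iff. apply ismag_mag. rewrite mag_opp, Hms. auto. }
      rewrite E in H1. auto. }
    assert (Hps : ε s <= s) by (apply pos_or_mag; auto).
    assert (Hsle : s <= ε u).
    { destruct (classic (s = ε s)) as [E|E].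
      - rewrite <- Hms, <- E. apply le_refl.
      - pose proof (O4 S (one S) u (conj Hps (fun e => E (eq_sym e))) H) as H1.
        rewrite mul1r in H1. eapply le_trans; [exact H1|]. rewrite mulC.
        apply (mem_le _ _ (ismag_mag u) Hus). }
    assert (Hsin : s + ε u = ε u) by (apply conv; [apply ismag_mag | auto | rewrite <- Hms; auto]).
    assert (Hu1 : u = one S + ε u).
    { rewrite <- Hsin. unfold s. rewrite addCA, <- addA, (addA S (- one S)), (addC S (- one S)), add_opp, HE', add_mag. auto. }
    assert (HR1 : ε u <= one S).
    { destruct (le_total S (ε u) (one S)) as [H1|H1]; auto. exfalso. apply Hu.
      assert (H2 : one S + ε u = ε u).
      { apply conv; auto. apply ismag_mag. eapply le_trans; [apply (neg_one_le w Hw)|auto]. }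
      rewrite Hu1 at 1. rewrite H2. auto. }
    rewrite Hu1. eapply le_trans; [apply subdist; auto|]. rewrite mul1r.
    assert (Hx : ε (ε u) <= ε u) by (rewrite magmag; apply le_refl).
    pose proof (O5' m _ _ Hm Hx HR1) as H1. rewrite mul1r in H1.
    rewrite addC, absorb_of_le; [apply le_refl | apply mul_ismag; auto | auto | auto].
Qed.

Lemma MU {S : solid} (w m : S) (Hw : w <> ε w) : ismag m -> m * unt S w = m.
Proof. intro Hm. apply le_anti; [apply MU_upper | apply MU_lower]; auto. Qed.

Lemma Rlt1 {S : solid} (w : S) (Hw : w <> ε w) : ~ (one S <= ε (unt S w)).
Proof.
  intro H.
  assert (H2 : one S + ε (unt S w) = ε (unt S w)).
  { apply conv; auto. apply ismag_mag. eapply le_trans; [apply (neg_one_le w Hw)|apply (E_le_R w Hw)]. }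
  pose proof (mem_scale (unt S w) _ _ (ismag_mag _) H2) as H3.
  rewrite mul1r, mulC, (Ru w Hw), add_mag in H3. apply (u_zl w Hw). exact H3.
Qed.




Lemma all_le_M {S : solid} (x : S) : x <= ε (top S).
Proof.
  set (M := ε (top S)).
  assert (HMm : ismag M) by apply ismag_mag.
  assert (HM : forall y : S, ε y <= M).
  { intro y. apply le_of_absorb; auto. rewrite addC. apply mag_absorb. rewrite addC. apply E3. }
  assert (HM0 : zero S <> M).
  { intro E. destruct (E4 S) as [y [Hy1 Hy2]]. apply Hy1. apply le_anti.
    rewrite E; auto. apply zero_le_mag, ismag_mag. }
  destruct (E6 S (eq_sym mag0) (eq_sym HMm) (conj (zero_le_mag M HMm) HM0)) as [z [Hz [[Hz1 Hz2] [Hz3 Hz4]]]].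
  assert (HzM : z + M = M).
  { apply conv; auto. eapply le_trans; [|apply (HM z)].
    pose proof (O2 S _ _ (- z) Hz1) as H. rewrite E1, add_opp in H. auto. }
  assert (Hgen : forall x : S, x <= M).
  { intro y. destruct (le_total S y M) as [H|H]; auto.
    assert (Hp : ε y <= y) by (eapply le_trans; [apply HM|exact H]).
    destruct (classic (y = ε y)) as [E|E]. rewrite E; apply HM.
    set (w := y * inv S z).
    pose proof (mem_scale w z M HMm HzM) as H1.
    assert (H2 : w * z + M = M).
    { assert (H3 : w * M + M = M).
      { apply absorb_of_le. apply mul_ismag_r; auto. auto.
        rewrite <- (mul_ismag_r M w HMm). apply HM. }
      rewrite <- H3, addA, H1. auto. }
    assert (Hwz : w * z = y * unt S z).
    { unfold w. rewrite <- mulA, (mulC S (inv S z)). rewrite (proj1 (proj2 (inv_spec S Hz))). auto. }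
    rewrite Hwz in H2.
    pose proof (AM4 S y (unt S z) (unt S z)) as H3.
    assert (H4 : y * (unt S z + unt S z) + M = M).
    { assert (H5 : y * unt S z + y * unt S z + M = M) by (rewrite <- addA, H2, H2; auto).
      rewrite H3 in H5.
      assert (HK : ε y * unt S z + M = M).
      { apply absorb_of_le; auto. apply mul_ismag, ismag_mag.
        rewrite <- (mul_ismag _ (unt S z) (ismag_mag y)). apply HM. }
      rewrite <- !addA, HK, HK in H5. exact H5. }
    destruct (mem_le _ _ HMm H4) as [H5 _].
    pose proof (O4 S (one S) _ (conj Hp (fun e => E (eq_sym e))) (one_le_uu z Hz)) as H6.
    rewrite mul1r in H6. eapply le_trans; eauto. }
  apply Hgen.
Qed.

Lemma all_le_top {S : solid} (x : S) : x <= top S.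
Proof.
  assert (H : forall y : S, y + ε (top S) = ε (top S)).
  { intro y. apply conv. apply ismag_mag. apply all_le_M. apply all_le_M. }
  assert (Ht : top S = ε (top S)) by (transitivity (top S + ε (top S)); [symmetry; apply add_mag | apply H]).
  rewrite Ht. apply all_le_M.
Qed.


Lemma mulCA {S : solid} (x y z : S) : x * (y * z) = y * (x * z).
Proof. rewrite !mulA, (mulC S x y). auto. Qed.

Lemma lhs_iff {S : solid} (x y z : S) :
  x * y + x * z = x * (y + z) <-> ε x * y + ε x * z <= ε x * (y + z) + ε (y + z) * x.
Proof.
  rewrite (AM4 S x y z), <- addA, <- (AM2 S x (y + z)).
  assert (Hq : ismag (ε x * y + ε x * z)) by (apply ismag_add; apply mul_ismag, ismag_mag).
  rewrite (absorb_iff _ _ Hq). split; intro H.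
  - apply le_of_absorb; auto. apply ismag_mag.
  - apply absorb_of_le; auto. apply ismag_mag.
Qed.

Lemma max_le {S : solid} (a b c : S) : ismag a -> ismag b -> ismag c ->
  (a + b <= c <-> a <= c /\ b <= c).
Proof.
  intros Ha Hb Hc. split.
  - intro H. split; eapply le_trans; try exact H.
    apply le_add_mag; auto. rewrite addC; apply le_add_mag; auto.
  - intros [H1 H2]. destruct (mag_max a b Ha Hb) as [E|E]; rewrite E; auto.
Qed.

Lemma le_max {S : solid} (a b c : S) : ismag a -> ismag b -> c <= a + b -> c <= a \/ c <= b.
Proof. intros Ha Hb H. destruct (mag_max a b Ha Hb) as [E|E]; rewrite E in H; auto. Qed.

Lemma le_addl {S : solid} (a c : S) : ismag a -> c <= a + c.
Proof. intro. rewrite addC. apply le_add_mag; auto. Qed.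

Lemma FM {S : solid} (N y z : S) : ismag N -> ismag y -> N * (y + z) = N * y + N * z.
Proof.
  intros HN Hy. apply le_anti. apply subdist; auto.
  apply max_le; try apply mul_ismag; auto; try apply ismag_add; auto.
  split.
  - eapply le_trans; [apply (mon N y (ε (y + z))); auto; try apply ismag_mag|].
    + rewrite mag_add, Hy. apply le_add_mag, ismag_mag.
    + rewrite mulC. apply magw_le; auto.
  - destruct (le_total S (ε z) z) as [H|H].
    + apply O5'; auto. apply le_addl; auto.
    + rewrite <- (mul_opp_m N z HN), <- (mul_opp_m N (y + z) HN).
      apply O5'; auto. apply opp_pos; auto.
      rewrite opp_add, (opp_mag y Hy). apply le_addl; auto.
Qed.

Lemma double_le {S : solid} (m y : S) : ismag m -> m * (y + y) <= m * y.
Proof. intro Hm. eapply le_trans; [apply subdist; auto|]. rewrite mag_idem; [apply le_refl|apply mul_ismag; auto]. Qed.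

Lemma y_le_yz_pos {S : solid} (y z : S) : ε z <= z -> y <= y + z.
Proof. intro H. eapply le_trans; [apply (le_add_mag y (ε z)), ismag_mag|]. apply O2l; auto. Qed.

Lemma canc_pos {S : solid} (N B y z : S) : ismag N -> ismag B -> ε y <= y ->
  ~ (N * y <= N * (y + z)) -> B * z <= B * y /\ B * y <= B * z.
Proof.
  intros HN HB Hy Hc.
  destruct (le_total S (ε z) z) as [Hz|Hz].
  { exfalso. apply Hc. apply O5'; auto. apply y_le_yz_pos; auto. }
  assert (Hz' : ε (- z) <= - z) by (apply opp_pos; auto).
  split.
  - destruct (le_total S (- z) (y + y)) as [H|H].
    + rewrite <- (mul_opp_m B z HB). eapply le_trans; [apply O5'; eauto|]. apply double_le; auto.
    + exfalso. apply Hc. pose proof (O2 S _ _ (- y) H) as H1.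
      rewrite <- addA, add_opp, add_mag, (addC S (- z)), <- opp_add in H1.
      rewrite <- (mul_opp_m N (y + z) HN). apply O5'; auto.
  - destruct (le_total S y (- z + - z)) as [H|H].
    + rewrite <- (mul_opp_m B z HB). eapply le_trans; [apply O5'; eauto|]. apply double_le; auto.
    + exfalso. apply Hc. pose proof (O2 S _ _ z H) as H1.
      rewrite <- addA, (addC S (- z) z), add_opp, <- (mag_opp z), add_mag in H1.
      pose proof (O2 S _ _ (y + z) H1) as H2.
      rewrite addCA, (addC S (- z) z), add_opp in H2.
      eapply le_trans; [|apply (double_le N (y + z) HN)]. apply O5'; auto.
      eapply le_trans; [|exact H2]. apply le_add_mag, ismag_mag.
Qed.

Lemma canc {S : solid} (N B y z : S) : ismag N -> ismag B ->
  ~ (N * y <= N * (y + z)) -> B * z <= B * y /\ B * y <= B * z.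
Proof.
  intros HN HB Hc. destruct (le_total S (ε y) y) as [Hy|Hy].
  - apply canc_pos with N; auto.
  - pose proof (canc_pos N B (- y) (- z) HN HB (opp_pos y Hy)) as H.
    rewrite !(mul_opp_m B _ HB) in H. apply H.
    rewrite <- opp_add, !(mul_opp_m N _ HN). auto.
Qed.

Lemma xdx {S : solid} (x : S) (Hx : x <> ε x) : x * inv S x = unt S x.
Proof. apply (proj1 (proj2 (inv_spec S Hx))). Qed.

Lemma Rdef {S : solid} (x : S) (Hx : x <> ε x) : ε (unt S x) = ε x * inv S x.
Proof. apply AM3; auto. Qed.

Lemma swap_inv {S : solid} (B y z : S) (Hy : y <> ε y) (Hz : z <> ε z) : ismag B ->
  B * z <= B * y -> B * inv S y <= B * inv S z.
Proof.
  intros HB H. pose proof (mon (inv S y * inv S z) _ _ (mul_ismag B z HB) (mul_ismag B y HB) H) as H1.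
  assert (E1 : inv S y * inv S z * (B * z) = B * inv S y).
  { rewrite mulCA, <- !mulA, (mulC S (inv S z) z), (xdx z Hz), mulA, MU; auto. apply mul_ismag; auto. }
  assert (E2 : inv S y * inv S z * (B * y) = B * inv S z).
  { rewrite (mulC S (inv S y) (inv S z)), mulCA, <- !mulA, (mulC S (inv S y) y), (xdx y Hy), mulA, MU; auto. apply mul_ismag; auto. }
  rewrite E1, E2 in H1. auto.
Qed.

Lemma dir2 {S : solid} (x y z : S) (Hx : x <> ε x) (Hy : y <> ε y) (Hz : z <> ε z) :
  ~ (ε x * y <= ε x * (y + z)) -> ε x * y <= (ε y + ε z) * x ->
  ε (unt S x) <= ε (unt S y) + ε (unt S z).
Proof.
  intros Hc H.
  assert (HAB : ismag (ε y + ε z)) by (apply ismag_add; apply ismag_mag).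
  pose proof (mon (inv S x) _ _ (mul_ismag _ y (ismag_mag x)) (mul_ismag _ x HAB) H) as H1.
  rewrite mulCA, mulA, <- (Rdef x Hx), (mulCA (inv S x)), (mulC S (inv S x) x), (xdx x Hx), (MU x _ Hx HAB) in H1.
  pose proof (mon (inv S y) _ _ (mul_ismag _ y (ismag_mag _)) HAB H1) as H2.
  rewrite mulCA, (mulC S (inv S y) y), (xdx y Hy), (MU y _ Hy (ismag_mag _)) in H2.
  rewrite dist_mag, (mulC S (inv S y) (ε y)), <- (Rdef y Hy) in H2; try apply ismag_mag.
  eapply le_trans; [exact H2|]. apply O2l. rewrite mulC, (Rdef z Hz).
  apply swap_inv; auto. apply ismag_mag.
  apply (canc (ε x) (ε z) y z (ismag_mag x) (ismag_mag z) Hc).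
Qed.

Lemma dir1 {S : solid} (x y z : S) (Hx : x <> ε x) (Hy : y <> ε y) (Hz : z <> ε z) :
  ~ (ε x * y <= ε x * (y + z)) -> ε (unt S x) <= ε (unt S y) + ε (unt S z) ->
  ε x * y + ε x * z <= ε x * (y + z) + (ε y + ε z) * x.
Proof.
  intros Hc H.
  assert (HAB : ismag (ε y + ε z)) by (apply ismag_add; apply ismag_mag).
  destruct (canc (ε x) (ε z) y z (ismag_mag x) (ismag_mag z) Hc) as [_ HB].
  pose proof (swap_inv (ε z) z y Hz Hy (ismag_mag z) HB) as H1.
  rewrite <- (Rdef z Hz) in H1.
  assert (H2 : ε (unt S x) <= (ε y + ε z) * inv S y).
  { eapply le_trans; [exact H|]. rewrite (mulC S _ (inv S y)), dist_mag; try apply ismag_mag.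
    rewrite (mulC S (inv S y) (ε y)), <- (Rdef y Hy). apply O2l. rewrite mulC. auto. }
  pose proof (mon y _ _ (ismag_mag _) (mul_ismag _ _ HAB) H2) as H3.
  rewrite mulCA, (xdx y Hy), (MU y _ Hy HAB) in H3.
  pose proof (mon x _ _ (mul_ismag_r _ _ (ismag_mag _)) HAB H3) as H4.
  rewrite (Rdef x Hx), (mulCA x y), (mulCA x (ε x)), (xdx x Hx), mulCA, mulA, (MU x _ Hx), (mulC S x) in H4;
    [| apply mul_ismag, ismag_mag].
  destruct (canc (ε x) (ε x) y z (ismag_mag x) (ismag_mag x) Hc) as [HN _].
  rewrite (addC S (ε x * y)), (absorb_of_le _ _ (mul_ismag _ _ (ismag_mag x)) (mul_ismag _ _ (ismag_mag x)) HN).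
  eapply le_trans; [exact H4|]. apply le_addl. apply mul_ismag, ismag_mag.
Qed.


Lemma relunc_zl {S : solid} (x : S) : x <> ε x -> relunc S x = ε (unt S x).
Proof. intro H. unfold relunc. destruct (excluded_middle_informative (x = mag S x)); tauto. Qed.

Lemma relunc_mag {S : solid} (x : S) : x = ε x -> relunc S x = top S.
Proof. intro H. unfold relunc. destruct (excluded_middle_informative (x = mag S x)); tauto. Qed.

Lemma F_iff {S : solid} (x y z : S) :
  ε x * (y + z) = ε x * y + ε x * z <-> ε x * y + ε x * z <= ε x * (y + z).
Proof.
  split; intro H.
  - rewrite <- H. apply le_refl.
  - apply le_anti; auto. apply subdist, ismag_mag.
Qed.

Close Scope sol_scope.

Theorem mainTheorem1 (S : solid) (x y z : S) :
  add S (mul S x y) (mul S x z) = mul S x (add S y z) <->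
  (mul S (mag S x) (add S y z) = add S (mul S (mag S x) y) (mul S (mag S x) z)
   \/ le S (relunc S x) (add S (relunc S y) (relunc S z))).
Proof.
  Local Open Scope sol_scope.
  rewrite (lhs_iff x y z), mag_add, F_iff.
  assert (HN : ismag (ε x)) by apply ismag_mag.
  assert (HQ : ismag (ε x * y + ε x * z)) by (apply ismag_add; apply mul_ismag; auto).
  assert (HP : ismag (ε x * (y + z))) by (apply mul_ismag; auto).
  assert (HT : ismag ((ε y + ε z) * x)) by (apply mul_ismag, ismag_add; apply ismag_mag).
  assert (Fsw : ε x * y + ε x * z <= ε x * (y + z) <-> ε x * z + ε x * y <= ε x * (z + y))
    by (rewrite (addC S y z), (addC S (ε x * y)); tauto).
  assert (FL : ε x * y + ε x * z <= ε x * (y + z) -> ε x * y + ε x * z <= ε x * (y + z) + (ε y + ε z) * x)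
    by (intro H; eapply le_trans; [exact H| apply le_add_mag; auto]).
  assert (FM1 : y = ε y -> ε x * y + ε x * z <= ε x * (y + z)).
  { intro Hy. rewrite FM; auto. apply le_refl. symmetry; auto. }
  assert (FM2 : z = ε z -> ε x * y + ε x * z <= ε x * (y + z)).
  { intro Hz. rewrite (addC S y z), (addC S (ε x * y)), FM; auto. apply le_refl. symmetry; auto. }
  destruct (classic (x = ε x)) as [Hx|Hx].
  - rewrite (relunc_mag x Hx).
    assert (HTP : (ε y + ε z) * x <= ε x * (y + z)).
    { rewrite <- mag_add. assert (E : ε (y + z) * x = ε (y + z) * ε x) by (f_equal; exact Hx).
      rewrite E. apply magw_le; auto. }
    rewrite (addC S (ε x * (y + z))), (absorb_of_le _ _ HT HP HTP).
    split; [intro H; left; exact H|]. intros [H|H]; auto.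
    destruct (classic (y = ε y)) as [Hy|Hy]; auto.
    destruct (classic (z = ε z)) as [Hz|Hz]; auto.
    exfalso. rewrite (relunc_zl y Hy), (relunc_zl z Hz) in H.
    pose proof (le_trans S _ _ _ (all_le_top (one S)) H) as H1.
    destruct (le_max _ _ _ (ismag_mag _) (ismag_mag _) H1) as [H2|H2].
    + exact (Rlt1 y Hy H2).
    + exact (Rlt1 z Hz H2).
  - destruct (classic (y = ε y)) as [Hy|Hy].
    { split; intro; [left; auto | apply FL; auto]. }
    destruct (classic (z = ε z)) as [Hz|Hz].
    { split; intro; [left; auto | apply FL; auto]. }
    rewrite (relunc_zl x Hx), (relunc_zl y Hy), (relunc_zl z Hz).
    assert (Hnot : ~ (ε x * y + ε x * z <= ε x * (y + z)) ->
              ~ (ε x * y <= ε x * (y + z)) \/ ~ (ε x * z <= ε x * (z + y))).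
    { intro H. rewrite (addC S z y). apply NNPP. intro H1. apply H.
      apply max_le; try apply mul_ismag; auto. split; apply NNPP; tauto. }
    split.
    + intro H. destruct (classic (ε x * y + ε x * z <= ε x * (y + z))) as [F|F]; [left; auto|right].
      destruct (Hnot F) as [G|G].
      * apply dir2; auto.
        assert (H1 : ε x * y <= ε x * (y + z) + (ε y + ε z) * x).
        { eapply le_trans; [|exact H]. apply le_add_mag. apply mul_ismag; auto. }
        destruct (le_max _ _ _ HP HT H1); tauto.
      * rewrite (addC S (ε (unt S y))). apply dir2; auto.
        assert (H1 : ε x * z <= ε x * (y + z) + (ε y + ε z) * x).
        { eapply le_trans; [|exact H]. apply le_addl. apply mul_ismag; auto. }
        rewrite (addC S y z), (addC S (ε y)) in H1.
        destruct (le_max _ _ _ (mul_ismag _ _ HN) (mul_ismag _ _ (ismag_add _ _ (ismag_mag z) (ismag_mag y))) H1); tauto.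
    + intros [F|H]; [apply FL; auto|].
      destruct (classic (ε x * y + ε x * z <= ε x * (y + z))) as [F|F]; [apply FL; auto|].
      destruct (Hnot F) as [G|G].
      * apply dir1; auto.
      * rewrite (addC S y z), (addC S (ε x * y)), (addC S (ε y)). apply dir1; auto.
        rewrite addC; auto.
Qed.
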